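(* Let $A\subseteq\Gamma$ be a finite set. If $\mathsf{E}_3(A)\ge2|A|^3$ then, for each choice of sign, $$\Big(\max_{s\ne0}|A\pm A_s|\Big)^3\gg\frac{|A|^{10}}{|A-A|\,\mathsf{E}^2(A)}.$$ Now let $\beta,\gamma\in[0,1]$ with $\beta\le1/2$, suppose $A$ is $(3,\beta,\gamma)$-connected and $\mathsf{E}_3(A)\ge2^4\gamma^{-1}|A|^3$. Then, for each choice of sign, $$\Big(\max_{s\ne0}|A\pm A_s|\Big)^2\gg\gamma\frac{|A|^5}{\mathsf{E}(A)}.$$
   Context: $\Gamma$ is an abelian group. $A_s=A\cap(A-s)$. $\mathsf{E}_k(A)=\sum_s|A_s|^k$ for real $k\ge1$, $\mathsf{E}(A)=\mathsf{E}_2(A)$. For real $\alpha>1$, $A$ is $(\alpha,\beta,\gamma)$-connected if every $B\subseteq A$ with $|B|\ge\beta|A|$ satisfies $\mathsf{E}_\alpha(B)\ge\gamma(|B|/|A|)^{2\alpha}\mathsf{E}_\alpha(A)$. $\ll,\gg$ hide absolute constants. *)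

(* Defs.v *)
From HB Require Import structures.
From mathcomp Require Import all_boot all_order all_algebra.
From mathcomp Require Import finmap.
Set Implicit Arguments. Unset Strict Implicit. Unset Printing Implicit Defensive.
Import Order.TTheory GRing.Theory Num.Theory.
Local Open Scope fset_scope.
Local Open Scope ring_scope.

Section Defs.
Variable G : zmodType.

Definition sumset (A B : {fset G}) : {fset G} := [fset a + b | a in A, b in B].
Definition diffset (A B : {fset G}) : {fset G} := [fset a - b | a in A, b in B].

Definition pmset (plus : bool) (A B : {fset G}) : {fset G} :=
  if plus then sumset A B else diffset A B.

Definition Ashift (A : {fset G}) (s : G) : {fset G} :=
  A `&` [fset a - s | a in A].

(* E_k(A) = sum_s |A_s|^k ; A_s is empty unless s ∈ A - A, so the sum over
   Gamma equals the (finite) sum over A - A. *)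
Definition energy (k : nat) (A : {fset G}) : nat :=
  (\sum_(s <- diffset A A) #|` Ashift A s| ^ k)%N.

(* max_{s != 0} |A ± A_s|  (A_s = ∅ for s ∉ A - A, so only s ∈ A - A matter;
   the empty max is 0) *)
Definition maxpm (plus : bool) (A : {fset G}) : nat :=
  (\max_(s <- diffset A A | s != 0%R) #|` pmset plus A (Ashift A s)|)%N.

(* A is (alpha, beta, gamma)-connected, for alpha = k a natural number *)
Definition connected (R : realFieldType) (k : nat) (beta gamma : R)
  (A : {fset G}) : Prop :=
  forall B : {fset G}, B `<=` A ->
    (#|` B|%:R >= beta * #|` A|%:R) ->
    (energy k B)%:R >= gamma * ((#|` B|%:R / #|` A|%:R) ^+ (2 * k)) * (energy k A)%:R.
End Defs.

(* Main.v *)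
Require Import Defs.
From HB Require Import structures.
From mathcomp Require Import all_boot all_order all_algebra.
From mathcomp Require Import finmap.
From mathcomp Require Import zify ring lra.
Import Order.TTheory GRing.Theory Num.Theory.
Local Open Scope fset_scope.
Local Open Scope ring_scope.
Set Implicit Arguments. Unset Strict Implicit. Unset Printing Implicit Defensive.

Lemma sum_eq_uniq (T : eqType) (r : seq T) (a : T) (F : T -> nat) :
  uniq r -> (\sum_(i <- r) (a == i) * F i = (a \in r) * F a)%N.
Proof.
move=> ur.
rewrite (eq_bigr (fun i => (a == i) * F a)%N); last first.
  by move=> i _; case: eqP => // ->.
rewrite -big_distrl /=; congr (_ * _)%N.
rewrite (eq_bigr (fun i => if pred1 a i then 1 else 0)%N); last first.
  by move=> i _; rewrite /= eq_sym; case: eqP.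
by rewrite -big_mkcond sum1_count count_uniq_mem.
Qed.

Lemma CS_real (R : realDomainType) (I : Type) (r : seq I) (f g : I -> R) :
  (\sum_(i <- r) f i * g i) ^+ 2 <= (\sum_(i <- r) f i ^+ 2) * (\sum_(i <- r) g i ^+ 2).
Proof.
have H : 0 <= \sum_(i <- r) \sum_(j <- r) (f i * g j - f j * g i) ^+ 2.
  by apply: sumr_ge0 => i _; apply: sumr_ge0 => j _; apply: sqr_ge0.
have E : \sum_(i <- r) \sum_(j <- r) (f i * g j - f j * g i) ^+ 2 =
   2 * ((\sum_(i <- r) f i ^+ 2) * (\sum_(i <- r) g i ^+ 2) - (\sum_(i <- r) f i * g i) ^+ 2).
  have E1 : forall i j, (f i * g j - f j * g i) ^+ 2 =
     f i ^+ 2 * g j ^+ 2 + f j ^+ 2 * g i ^+ 2 - 2 * ((f i * g i) * (f j * g j)).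
    by move=> i j; rewrite sqrrB !exprMn; ring.
  have S1 : \sum_(i <- r) \sum_(j <- r) f i ^+ 2 * g j ^+ 2 =
      (\sum_(i <- r) f i ^+ 2) * (\sum_(i <- r) g i ^+ 2).
    by rewrite big_distrl /=; apply: eq_bigr => i _; rewrite big_distrr.
  have S2 : \sum_(i <- r) \sum_(j <- r) f j ^+ 2 * g i ^+ 2 =
      (\sum_(i <- r) f i ^+ 2) * (\sum_(i <- r) g i ^+ 2).
    by rewrite exchange_big /= S1.
  have S3 : \sum_(i <- r) \sum_(j <- r) ((f i * g i) * (f j * g j)) =
      (\sum_(i <- r) f i * g i) ^+ 2.
    by rewrite expr2 big_distrl /=; apply: eq_bigr => i _; rewrite big_distrr.
  rewrite (eq_bigr (fun i => \sum_(j <- r) (f i ^+ 2 * g j ^+ 2) + \sum_(j <- r) (f j ^+ 2 * g i ^+ 2)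
      - 2 * \sum_(j <- r) ((f i * g i) * (f j * g j)))); last first.
    by move=> i _; rewrite mulr_sumr -big_split -sumrB /=; apply: eq_bigr => j _; rewrite E1.
  rewrite sumrB big_split /= S1 S2 -mulr_sumr S3; ring.
rewrite E in H; rewrite -subr_ge0; rewrite pmulr_rge0 // in H.
Qed.

Lemma CS_nat (I : Type) (r : seq I) (f g : I -> nat) :
  ((\sum_(i <- r) f i * g i) ^ 2 <= (\sum_(i <- r) f i ^ 2) * (\sum_(i <- r) g i ^ 2))%N.
Proof.
rewrite -(ler_nat rat) !natrX natrM !natr_sum.
under eq_bigr do rewrite natrM.
under [X in _ <= X * _]eq_bigr do rewrite natrX.
under [X in _ <= _ * X]eq_bigr do rewrite natrX.
exact: CS_real.
Qed.

Lemma CS_size (I : Type) (r : seq I) (f : I -> nat) :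
  ((\sum_(i <- r) f i) ^ 2 <= size r * (\sum_(i <- r) f i ^ 2))%N.
Proof.
have := CS_nat r f (fun _ => 1%N).
rewrite (eq_bigr (fun i => f i)); last by move=> i _; rewrite muln1.
rewrite [X in (_ <= _ * X)%N -> _](eq_bigr (fun _ => 1%N)) //.
by rewrite sum1_size mulnC.
Qed.


Lemma in_Ashift (G : zmodType) (X : {fset G}) s x :
  (x \in Ashift X s) = (x \in X) && (x + s \in X).
Proof.
rewrite /Ashift in_fsetI; congr (_ && _); apply/imfsetP/idP => [[a aX ->]|xs].
  by rewrite subrK.
by exists (x + s) => //; rewrite addrK.
Qed.

Lemma Ashift_sep (G : zmodType) (X : {fset G}) s :
  Ashift X s = [fset x in X | x + s \in X].
Proof. by apply/fsetP => x; rewrite in_Ashift !inE. Qed.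

Lemma card_Ashift (G : zmodType) (X : {fset G}) s :
  #|` Ashift X s| = (\sum_(x <- X) ((x + s)%R \in X))%N.
Proof.
rewrite card_fset_sum1 Ashift_sep -big_fset_condE big_mkcond /=.
by apply: eq_bigr => i _; case: (_ \in _).
Qed.



Lemma Ashift_sub (G : zmodType) (X : {fset G}) s : Ashift X s `<=` X.
Proof. by apply/fsubsetP => x; rewrite in_Ashift => /andP[]. Qed.

Lemma Ashift_mono (G : zmodType) (X Y : {fset G}) s :
  X `<=` Y -> Ashift X s `<=` Ashift Y s.
Proof.
move/fsubsetP=> XY; apply/fsubsetP => x; rewrite !in_Ashift => /andP[a b].
by rewrite !XY.
Qed.

Lemma in_diffset (G : zmodType) (A : {fset G}) x y :
  x \in A -> y \in A -> x - y \in diffset A A.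
Proof. by move=> xA yA; apply/imfset2P; exists x => //; exists y. Qed.

Lemma Ashift0 (G : zmodType) (X : {fset G}) : Ashift X 0 = X.
Proof. by apply/fsetP => x; rewrite in_Ashift addr0 andbb. Qed.

Lemma Ashift_card0 (G : zmodType) (X A : {fset G}) s :
  X `<=` A -> s \notin diffset A A -> #|` Ashift X s| = 0%N.
Proof.
move/fsubsetP=> XA sD; apply/eqP; rewrite cardfs_eq0; apply/eqP/fsetP => x.
rewrite in_Ashift inE; apply/negbTE; apply/negP => /andP[xX xsX].
by move: sD; rewrite -(addKr x s) addrC in_diffset // XA.
Qed.

Lemma sum_shift (G : zmodType) (D X : {fset G}) y (g : G -> nat) :
  (forall u, u \in X -> u - y \in D) ->
  (\sum_(s <- D) ((y + s)%R \in X) * g (y + s)%R = \sum_(u <- X) g u)%N.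
Proof.
move=> HD.
transitivity (\sum_(s <- D) \sum_(u <- X) ((y + s)%R == u) * g u)%N.
  by apply: eq_bigr => s _; rewrite sum_eq_uniq ?fset_uniq.
rewrite exchange_big /=; apply: eq_big_seq => u uX.
transitivity (\sum_(s <- D) ((u - y)%R == s) * g u)%N.
  apply: eq_bigr => s _; congr (_ * _)%N.
  by rewrite subr_eq eq_sym addrC.
by rewrite sum_eq_uniq ?fset_uniq // HD // mul1n.
Qed.

Lemma sum_card_Ashift (G : zmodType) (D X : {fset G}) :
  (forall u v, u \in X -> v \in X -> v - u \in D) ->
  (\sum_(s <- D) #|` Ashift X s| = #|` X| ^ 2)%N.
Proof.
move=> HD.
under eq_bigr do rewrite card_Ashift.
rewrite exchange_big /= (eq_big_seq (fun _ => 1 * #|` X|)%N).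
  by rewrite -big_distrl /= -card_fset_sum1 expnS expn1.
move=> x xX.
transitivity (\sum_(s <- D) ((x + s)%R \in X) * 1)%N.
  by apply: eq_bigr => s _; rewrite muln1.
rewrite (@sum_shift _ D X x (fun _ => 1%N)) ?mul1n ?card_fset_sum1 // => u uX; exact: HD.
Qed.



Definition Qe (G : zmodType) (D X Y : {fset G}) : nat :=
  (\sum_(d <- D) #|` Ashift X d| * #|` Ashift Y d|)%N.

Lemma pair_count (G : zmodType) (X : {fset G}) d :
  (\sum_(x <- X) \sum_(x' <- X) ((x' - x)%R == d) = #|` Ashift X d|)%N.
Proof.
rewrite card_Ashift; apply: eq_bigr => x _.
transitivity (\sum_(x' <- X) ((x + d)%R == x') * 1)%N.
  apply: eq_bigr => x' _; rewrite muln1; congr nat_of_bool.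
  by rewrite subr_eq eq_sym addrC.
by rewrite sum_eq_uniq ?fset_uniq // muln1.
Qed.

Lemma Q_expand (G : zmodType) (D X Y : {fset G}) :
  (forall x x', x \in X -> x' \in X -> x' - x \in D) ->
  (\sum_(x <- X) \sum_(x' <- X) \sum_(y <- Y) \sum_(y' <- Y) ((x' - x)%R == (y' - y)%R)
   = Qe D X Y)%N.
Proof.
move=> HD; rewrite /Qe.
under [RHS]eq_bigr do rewrite -!pair_count big_distrl /=.
under [RHS]eq_bigr do under eq_bigr do rewrite big_distrl /=.
under [RHS]eq_bigr do under eq_bigr do under eq_bigr do rewrite big_distrr /=.
under [RHS]eq_bigr do under eq_bigr do under eq_bigr do under eq_bigr do rewrite big_distrr /=.
rewrite [RHS]exchange_big /=; apply: eq_big_seq => x xX.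
rewrite [RHS]exchange_big /=; apply: eq_big_seq => x' x'X.
rewrite [RHS]exchange_big /=; apply: eq_bigr => y _.
rewrite [RHS]exchange_big /=; apply: eq_bigr => y' _.
by rewrite sum_eq_uniq ?fset_uniq // HD // mul1n eq_sym.
Qed.

Lemma pmset_mem (G : zmodType) (p : bool) (X Y : {fset G}) x y :
  x \in X -> y \in Y -> (if p then x + y else x - y) \in pmset p X Y.
Proof.
by move=> xX yY; case: p; rewrite /pmset /sumset /diffset; apply/imfset2P;
  exists x => //; exists y.
Qed.

Lemma size_fset (G : choiceType) (S : {fset G}) : size S = #|` S|.
Proof. by rewrite card_fset_sum1 sum1_size. Qed.

Lemma eq_shift (G: zmodType) (a b c d : G): (a + b == c + d) = (c - a == b - d).
Proof.
apply/eqP/eqP => H.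
  by rewrite -(addrK d c) -H addrAC (addrC a) addrK.
by rewrite -(subrK a c) H addrAC subrK addrC.
Qed.

Lemma eq_sub_add (G: zmodType) (u v a b : G): (u - a == v - b) = (u + b == v + a).
Proof.
apply/eqP/eqP => H.
  by rewrite -(subrK a u) H addrAC subrK.
by rewrite -(addrK b u) H addrAC addrK.
Qed.

Lemma quad_rearr (G : zmodType) (p : bool) (D X : {fset G}) (Y : {fset G}) :
  (forall x x', x \in X -> x' \in X -> x' - x \in D) ->
  (\sum_(x' <- X) \sum_(y' <- Y) \sum_(x <- X) \sum_(y <- Y)
     ((if p then x + y else x - y)%R == (if p then x' + y' else x' - y')%R)
     = Qe D X Y)%N.
Proof.
move=> HD; rewrite -Q_expand //.
under eq_bigr do rewrite exchange_big /=.
rewrite exchange_big /=; apply: eq_bigr => x _; apply: eq_bigr => x' _.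
case: p.
  apply: eq_bigr => a _; apply: eq_bigr => b _.
  by rewrite eq_shift.
rewrite exchange_big /=; apply: eq_bigr => a _; apply: eq_bigr => b _.
by rewrite eq_sub_add eq_shift.
Qed.

Lemma CS_sumset (G : zmodType) (p : bool) (D X Y : {fset G}) :
  (forall x x', x \in X -> x' \in X -> x' - x \in D) ->
  (#|` X| ^ 2 * #|` Y| ^ 2 <= #|` pmset p X Y| * Qe D X Y)%N.
Proof.
move=> HD.
pose op := fun x y : G => if p then x + y else x - y.
pose S := pmset p X Y.
pose r := fun z => (\sum_(x <- X) \sum_(y <- Y) (op x y == z))%N.
have Smem : forall x y, x \in X -> y \in Y -> op x y \in S by exact: pmset_mem.
have H1 : (\sum_(z <- S) r z = #|` X| * #|` Y|)%N.
  rewrite /r exchange_big /= card_fset_sum1 big_distrl /=.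
  apply: eq_big_seq => x xX; rewrite exchange_big /= card_fset_sum1 big_distrr /=.
  apply: eq_big_seq => y yY; rewrite muln1.
  transitivity (\sum_(z <- S) (op x y == z) * 1)%N.
    by apply: eq_bigr => z _; rewrite muln1.
  by rewrite sum_eq_uniq ?fset_uniq // Smem.
have H2 : (\sum_(z <- S) r z ^ 2 =
     \sum_(x' <- X) \sum_(y' <- Y) \sum_(x <- X) \sum_(y <- Y) (op x y == op x' y'))%N.
  transitivity (\sum_(z <- S) \sum_(x' <- X) \sum_(y' <- Y) (op x' y' == z) * r z)%N.
    apply: eq_bigr => z _; rewrite expnS expn1 {1}/r big_distrl /=.
    by apply: eq_bigr => x' _; rewrite big_distrl.
  rewrite exchange_big /=; apply: eq_big_seq => x' x'X.
  rewrite exchange_big /=; apply: eq_big_seq => y' y'Y.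
  by rewrite sum_eq_uniq ?fset_uniq // Smem // mul1n.
have H3 := quad_rearr p Y HD.
have := CS_size S r.
by rewrite H1 H2 H3 !expnMn.
Qed.



Lemma diffD (G : zmodType) (A X : {fset G}) :
  X `<=` A -> forall x x', x \in X -> x' \in X -> x' - x \in diffset A A.
Proof. by move/fsubsetP=> XA x x' xX x'X; apply: in_diffset; apply: XA. Qed.

Lemma sum_sub (G : choiceType) (D' D : {fset G}) (F : G -> nat) :
  D' `<=` D -> (forall s, s \in D -> s \notin D' -> F s = 0%N) ->
  (\sum_(s <- D) F s = \sum_(s <- D') F s)%N.
Proof.
move=> /fsubsetP sub H0.
rewrite (big_fsetID _ (mem D')) /= [X in (_ + X)%N]big1_fset ?addn0.
  by apply: eq_fbigl => x; rewrite !inE /= andbC; case xD: (x \in D') => //=; rewrite sub.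
by move=> s; rewrite !inE /= => /andP[sD' sD] _; apply: H0.
Qed.

Lemma energy_D (G : zmodType) (A X : {fset G}) k :
  X `<=` A -> (0 < k)%N ->
  energy k X = (\sum_(s <- diffset A A) #|` Ashift X s| ^ k)%N.
Proof.
move=> XA k0; rewrite /energy; symmetry; apply: sum_sub.
  apply/fsubsetP => z /imfset2P [x xX [y yX ->]].
  by apply: in_diffset; apply: (fsubsetP XA).
by move=> s _ sX; rewrite (Ashift_card0 (fsubset_refl X) sX) exp0n.
Qed.

Lemma energy2_Q (G : zmodType) (A : {fset G}) :
  energy 2 A = Qe (diffset A A) A A.
Proof.
by rewrite (energy_D (fsubset_refl A)) //; apply: eq_bigr => s _; rewrite expnS expn1.
Qed.

Lemma card_Ashift_le (G : zmodType) (X : {fset G}) s : (#|` Ashift X s| <= #|` X|)%N.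
Proof. exact/fsubset_leq_card/Ashift_sub. Qed.

Lemma Q_CS (G : zmodType) (D X Y : {fset G}) :
  (Qe D X Y ^ 2 <= Qe D X X * Qe D Y Y)%N.
Proof.
rewrite /Qe; have := CS_nat D (fun d => #|` Ashift X d|) (fun d => #|` Ashift Y d|).
congr (_ <= _ * _)%N; apply: eq_bigr => d _; by rewrite expnS expn1.
Qed.

Lemma QCC_le (G : zmodType) (A C : {fset G}) :
  C `<=` A -> (Qe (diffset A A) C C <= #|` C| ^ 3)%N.
Proof.
move=> CA; rewrite /Qe.
apply: (@leq_trans (\sum_(d <- diffset A A) #|` C| * #|` Ashift C d|)%N).
  by apply: leq_sum => d _; rewrite leq_mul2r card_Ashift_le orbT.
by rewrite -big_distrr /= sum_card_Ashift ?expnS ?expn1 //; apply: diffD.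
Qed.

Lemma Ashift_comm (G : zmodType) (X : {fset G}) s d :
  Ashift (Ashift X s) d = Ashift (Ashift X d) s.
Proof.
apply/fsetP => x; rewrite !in_Ashift.
by rewrite -!addrA [s + d]addrC; do 4 case: (_ \in X).
Qed.

Lemma sum_Q (G : zmodType) (A : {fset G}) :
  (\sum_(s <- diffset A A) Qe (diffset A A) A (Ashift A s) = energy 3 A)%N.
Proof.
rewrite (energy_D (fsubset_refl A)) // /Qe exchange_big /=.
apply: eq_bigr => d _; rewrite -big_distrr /=.
under eq_bigr do rewrite Ashift_comm.
rewrite sum_card_Ashift ?expnS ?expn1 ?mulnA //.
apply: diffD; exact: Ashift_sub.
Qed.

Lemma pmset_mono (G : zmodType) p (A Y Z : {fset G}) :
  Y `<=` Z -> pmset p A Y `<=` pmset p A Z.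
Proof.
move/fsubsetP=> YZ; apply/fsubsetP => z.
by case: p => /imfset2P [x xA [y yY ->]]; apply/imfset2P; exists x => //;
  exists y => //; apply: YZ.
Qed.

Lemma le_maxpm (G : zmodType) p (A X : {fset G}) s :
  X `<=` A -> s \in diffset A A -> s != 0 ->
  (#|` pmset p A (Ashift X s)| <= maxpm p A)%N.
Proof.
move=> XA sD s0.
have := @leq_bigmax_seq _ (enum_fset (diffset A A)) (fun s => s != 0)
  (fun s => #|` pmset p A (Ashift A s)|) s sD s0.
apply: leq_trans.
exact/fsubset_leq_card/pmset_mono/Ashift_mono.
Qed.



Lemma zero_in_D (G : zmodType) (A : {fset G}) :
  (0 < #|` A|)%N -> 0 \in diffset A A.
Proof.
rewrite cardfs_gt0 => /fset0Pn [x xA].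
by rewrite -(subrr x) in_diffset.
Qed.

Lemma energy_split (G : zmodType) (A X : {fset G}) k :
  X `<=` A -> (0 < k)%N -> 0 \in diffset A A ->
  energy k X = (#|` X| ^ k + \sum_(s <- diffset A A | s != 0%R) #|` Ashift X s| ^ k)%N.
Proof.
move=> XA k0 D0; rewrite (energy_D XA k0) (bigD1_seq 0) ?fset_uniq //=.
by rewrite Ashift0.
Qed.

Lemma sum_cond_le (G : eqType) (r : seq G) (P : pred G) (F : G -> nat) :
  (\sum_(s <- r | P s) F s <= \sum_(s <- r) F s)%N.
Proof. by rewrite [X in (_ <= X)%N](bigID P) /= leq_addr. Qed.

Lemma per_s_CS (G : zmodType) p (A X : {fset G}) s :
  X `<=` A -> s \in diffset A A -> s != 0 ->
  (#|` A| ^ 2 * #|` Ashift X s| ^ 2 <=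
     maxpm p A * Qe (diffset A A) A (Ashift X s))%N.
Proof.
move=> XA sD s0.
apply: leq_trans (CS_sumset p (Ashift X s) (diffD (fsubset_refl A))) _.
by rewrite leq_mul2r le_maxpm ?orbT.
Qed.

Lemma ineq_d (G : zmodType) p (A : {fset G}) :
  (#|` A| ^ 2 * \sum_(s <- diffset A A | s != 0%R) #|` Ashift A s| ^ 2
     <= maxpm p A * energy 3 A)%N.
Proof.
rewrite big_distrr /= -sum_Q big_distrr /=.
apply: (leq_trans _ (sum_cond_le _ (fun s => s != 0%R) _)).
rewrite [X in (X <= _)%N]big_seq_cond [X in (_ <= X)%N]big_seq_cond.
apply: leq_sum => s /andP[sD s0].
exact: per_s_CS.
Qed.

Lemma ineq_a (G : zmodType) p (A : {fset G}) :
  (#|` A| ^ 4 * \sum_(s <- diffset A A | s != 0%R) #|` Ashift A s| ^ 3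
     <= maxpm p A ^ 2 * energy 2 A *
        \sum_(s <- diffset A A | s != 0%R) #|` Ashift A s| ^ 2)%N.
Proof.
rewrite big_distrr [X in (_ <= X)%N]big_distrr /= [X in (X <= _)%N]big_seq_cond [X in (_ <= X)%N]big_seq_cond.
apply: leq_sum => s /andP[sD s0].
set c := #|` Ashift A s|.
have h1 := per_s_CS p (fsubset_refl A) sD s0.
have h2 := Q_CS (diffset A A) A (Ashift A s).
have h3 := QCC_le (Ashift_sub A s).
rewrite -energy2_Q -/c in h1 h2 h3.
set Q := Qe _ A (Ashift A s) in h1 h2.
set QC := Qe _ (Ashift A s) (Ashift A s) in h2 h3.
have h4 : (#|` A| ^ 4 * c ^ 4 <= maxpm p A ^ 2 * energy 2 A * c ^ 3)%N.
  have e1 : (#|` A| ^ 4 * c ^ 4 = (#|` A| ^ 2 * c ^ 2) * (#|` A| ^ 2 * c ^ 2))%N by ring.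
  rewrite e1; apply: leq_trans (leq_mul h1 h1) _.
  have e2 : (maxpm p A * Q * (maxpm p A * Q) = maxpm p A ^ 2 * Q ^ 2)%N by ring.
  rewrite e2 -mulnA leq_mul2l; apply/orP; right.
  apply: leq_trans h2 _; exact: leq_mul.
case: (posnP c) => [->|cpos]; first by rewrite !exp0n ?muln0.
rewrite -(leq_pmul2l cpos).
have e3 : (c * (#|` A| ^ 4 * c ^ 3) = #|` A| ^ 4 * c ^ 4)%N by ring.
have e4 : (c * (maxpm p A ^ 2 * energy 2 A * c ^ 2) = maxpm p A ^ 2 * energy 2 A * c ^ 3)%N by ring.
by rewrite e3 e4.
Qed.



Definition W (G : zmodType) (D X : {fset G}) (b : G) : nat :=
  (\sum_(s <- D) ((b + s)%R \in X) * #|` Ashift X s|)%N.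

Lemma sum_W (G : zmodType) (D X : {fset G}) :
  (\sum_(b <- X) W D X b = \sum_(s <- D) #|` Ashift X s| ^ 2)%N.
Proof.
rewrite /W exchange_big /=; apply: eq_bigr => s _.
by rewrite -big_distrl /= -card_Ashift expnS expn1.
Qed.

Lemma Bs_card (G : zmodType) (A B : {fset G}) s d :
  B `<=` A ->
  (#|` Ashift (Ashift B s) d| <= \sum_(x <- B) ((x + s)%R \in B) * ((x + d)%R \in A))%N.
Proof.
move=> BA; rewrite card_Ashift.
apply: (@leq_trans (\sum_(x <- Ashift B s) ((x + d)%R \in A))%N).
  apply: leq_sum => x _.
  case H: (_ \in Ashift B s) => //.
  move: H => /(fsubsetP (Ashift_sub B s)) /(fsubsetP BA) ->; by [].
rewrite Ashift_sep -big_fset_condE big_mkcond /=.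
by apply: leq_sum => x _; case: (_ \in B); rewrite ?mul1n ?mul0n.
Qed.

Lemma key_eq (G : zmodType) (D A B : {fset G}) :
  (\sum_(s <- D) #|` Ashift B s| * \sum_(d <- D) #|` Ashift A d| *
      \sum_(x <- B) ((x + s)%R \in B) * ((x + d)%R \in A)
   = \sum_(x <- B) W D B x * W D A x)%N.
Proof.
rewrite /W.
under [RHS]eq_bigr do rewrite big_distrl /=.
under [RHS]eq_bigr do under eq_bigr do rewrite big_distrr /=.
rewrite exchange_big /=; apply: eq_bigr => s _.
rewrite big_distrr /= [RHS]exchange_big /=; apply: eq_bigr => d _.
rewrite mulnA big_distrr /=; apply: eq_bigr => x _; ring.
Qed.

Lemma key_e (G : zmodType) (A B : {fset G}) :
  B `<=` A ->
  (\sum_(s <- diffset A A) #|` Ashift B s| * Qe (diffset A A) A (Ashift B s)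
    <= \sum_(x <- B) W (diffset A A) B x * W (diffset A A) A x)%N.
Proof.
move=> BA; rewrite -key_eq; apply: leq_sum => s _.
rewrite leq_mul2l; apply/orP; right; rewrite /Qe.
by apply: leq_sum => d _; rewrite leq_mul2l Bs_card ?orbT.
Qed.

Lemma ineq_e (G : zmodType) p (A B : {fset G}) :
  B `<=` A ->
  (forall b, b \in B -> #|` A| * W (diffset A A) A b <= 2 * energy 2 A)%N ->
  (#|` A| ^ 3 * \sum_(s <- diffset A A | s != 0%R) #|` Ashift B s| ^ 3
     <= 2 * maxpm p A * energy 2 A ^ 2)%N.
Proof.
move=> BA HB.
set M := maxpm p A; set E := energy 2 A; set n := #|` A|.
set D := diffset A A.
have h1 : (n ^ 2 * \sum_(s <- D | s != 0%R) #|` Ashift B s| ^ 3 <=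
           M * \sum_(s <- D) #|` Ashift B s| * Qe D A (Ashift B s))%N.
  rewrite big_distrr [X in (_ <= X)%N]big_distrr /=.
  apply: (leq_trans _ (sum_cond_le _ (fun s => s != 0%R) _)).
  rewrite [X in (X <= _)%N]big_seq_cond [X in (_ <= X)%N]big_seq_cond.
  apply: leq_sum => s /andP[sD s0].
  have := per_s_CS p BA sD s0; rewrite -/n -/M -/D => h.
  have e1 : (n ^ 2 * #|` Ashift B s| ^ 3 = #|` Ashift B s| * (n ^ 2 * #|` Ashift B s| ^ 2))%N by ring.
  have e2 : (M * (#|` Ashift B s| * Qe D A (Ashift B s)) = #|` Ashift B s| * (M * Qe D A (Ashift B s)))%N by ring.
  by rewrite e1 e2 leq_mul2l h orbT.
have h2 : (n * \sum_(x <- B) W D B x * W D A x <= 2 * E * E)%N.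
  rewrite big_distrr /=.
  apply: (@leq_trans (\sum_(x <- B) W D B x * (2 * E))%N).
    rewrite big_seq [X in (_ <= X)%N]big_seq; apply: leq_sum => x xB.
    have e : (n * (W D B x * W D A x) = W D B x * (n * W D A x))%N by ring.
    by rewrite e leq_mul2l HB ?orbT.
  rewrite -big_distrl /= sum_W mulnC leq_mul2l; apply/orP; right.
  rewrite /E (energy_D (fsubset_refl A)) //; apply: leq_sum => s _.
  by rewrite leq_exp2r // fsubset_leq_card // Ashift_mono.
have h3 := key_e BA; rewrite -/D in h3.
have e : (n ^ 3 = n * n ^ 2)%N by ring.
rewrite e -mulnA; apply: (@leq_trans (n * (M * \sum_(s <- D) #|` Ashift B s| * Qe D A (Ashift B s)))%N).
  by rewrite leq_mul2l h1 orbT.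
apply: (@leq_trans (M * (n * \sum_(x <- B) W D B x * W D A x))%N).
  have e' : forall a b, (n * (M * a) = M * (n * b))%N -> True by [].
  rewrite mulnCA leq_mul2l; apply/orP; right; rewrite leq_mul2l h3 orbT //.
apply: (@leq_trans (M * (2 * E * E))%N).
  by rewrite leq_mul2l h2 orbT.
have e2 : (M * (2 * E * E) = 2 * M * E ^ 2)%N by ring.
by rewrite e2.
Qed.

Lemma markov (G : choiceType) (A : {fset G}) (f : G -> nat) (T : nat) :
  (\sum_(a <- A) f a = T)%N -> (0 < T)%N ->
  (#|` A| <= 2 * #|` [fset a in A | #|` A| * f a <= 2 * T]|)%N.
Proof.
move=> sumT T0.
set P := fun a => (#|` A| * f a <= 2 * T)%N.
have cB : #|` [fset a in A | P a]| = (\sum_(a <- A | P a) 1)%N.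
  by rewrite card_fset_sum1 -big_fset_condE.
have cA : #|` A| = (\sum_(a <- A | P a) 1 + \sum_(a <- A | ~~ P a) 1)%N.
  by rewrite card_fset_sum1 (bigID P).
set k := (\sum_(a <- A | ~~ P a) 1)%N.
have hk : (2 * T * k <= #|` A| * T)%N.
  have RT : (#|` A| * T = \sum_(a <- A) #|` A| * f a)%N by rewrite -sumT big_distrr.
  rewrite RT /k big_distrr /=.
  apply: (@leq_trans (\sum_(a <- A | ~~ P a) #|` A| * f a)%N).
    apply: leq_sum => a; rewrite /P -ltnNge muln1 => h; exact: ltnW.
  exact: sum_cond_le.
have hk2 : (2 * k <= #|` A|)%N.
  by rewrite -(leq_pmul2r T0); move: hk; rewrite mulnAC.
rewrite cB; move: cA hk2; rewrite -/k; lia.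
Qed.



Lemma E3p_le (G : zmodType) (A X : {fset G}) :
  X `<=` A ->
  (\sum_(s <- diffset A A | s != 0%R) #|` Ashift X s| ^ 3 <=
    #|` A| * \sum_(s <- diffset A A | s != 0%R) #|` Ashift X s| ^ 2)%N.
Proof.
move=> XA; rewrite big_distrr /=; apply: leq_sum => s _.
rewrite expnS leq_mul2r; apply/orP; right.
apply: leq_trans (card_Ashift_le X s) _; exact: fsubset_leq_card.
Qed.

Lemma diff_CS (G : zmodType) (A : {fset G}) :
  (#|` A| ^ 4 <= #|` diffset A A| * energy 2 A)%N.
Proof.
have := CS_sumset false A (diffD (fsubset_refl A)).
by rewrite -energy2_Q /pmset -expnD.
Qed.

Lemma part1_nat (G : zmodType) p (A : {fset G}) :
  (2 * #|` A| ^ 3 <= energy 3 A)%N ->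
  (#|` A| ^ 10 <= 2 * maxpm p A ^ 3 * #|` diffset A A| * energy 2 A ^ 2)%N.
Proof.
move=> H.
case: (posnP #|` A|) => [->|n0]; first by rewrite exp0n.
have D0 := zero_in_D n0.
set n := #|` A| in n0 H *; set M := maxpm p A; set E := energy 2 A; set E3 := energy 3 A.
set E' := (\sum_(s <- diffset A A | s != 0%R) #|` Ashift A s| ^ 2)%N.
set E3' := (\sum_(s <- diffset A A | s != 0%R) #|` Ashift A s| ^ 3)%N.
have sE : E = (n ^ 2 + E')%N by rewrite /E (energy_split (fsubset_refl A)).
have sE3 : E3 = (n ^ 3 + E3')%N by rewrite /E3 (energy_split (fsubset_refl A)).
have hd : (n ^ 2 * E' <= M * E3)%N := ineq_d p A.
have ha : (n ^ 4 * E3' <= M ^ 2 * E * E')%N := ineq_a p A.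
have hle : (E3' <= n * E')%N := E3p_le (fsubset_refl A).
have hcs : (n ^ 4 <= #|` diffset A A| * E)%N := diff_CS A.
have E3'pos : (n ^ 3 <= E3')%N by lia.
have n3pos : (0 < n ^ 3)%N by rewrite expn_gt0 n0.
have E'pos : (0 < E')%N.
  case: (posnP E') => [E'0|//]; move: hle; rewrite E'0 muln0; lia.
have E3pos : (0 < E3)%N by lia.
have h6 : (n ^ 6 <= 2 * M ^ 3 * E)%N.
  have h1 : (n ^ 6 * E' * E3' <= M ^ 3 * E * E' * E3)%N.
    have := leq_mul hd ha.
    have e1 : (n ^ 2 * E' * (n ^ 4 * E3') = n ^ 6 * E' * E3')%N by ring.
    have e2 : (M * E3 * (M ^ 2 * E * E') = M ^ 3 * E * E' * E3)%N by ring.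
    by rewrite e1 e2.
  have h2 : (n ^ 6 * E3' <= M ^ 3 * E * E3)%N.
    rewrite -(leq_pmul2r E'pos); move: h1.
    have e1 : (n ^ 6 * E' * E3' = n ^ 6 * E3' * E')%N by ring.
    have e2 : (M ^ 3 * E * E' * E3 = M ^ 3 * E * E3 * E')%N by ring.
    by rewrite e1 e2.
  have h3 : (n ^ 6 * E3 <= 2 * M ^ 3 * E * E3)%N.
    apply: (@leq_trans (n ^ 6 * (2 * E3'))%N).
      by rewrite leq_mul2l sE3; apply/orP; right; lia.
    have e1 : (n ^ 6 * (2 * E3') = 2 * (n ^ 6 * E3'))%N by ring.
    have e2 : (2 * M ^ 3 * E * E3 = 2 * (M ^ 3 * E * E3))%N by ring.
    by rewrite e1 e2 leq_mul2l h2 orbT.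
  by rewrite -(leq_pmul2r E3pos).
have e : (n ^ 10 = n ^ 6 * n ^ 4)%N by ring.
have e2 : (2 * M ^ 3 * #|` diffset A A| * E ^ 2 = (2 * M ^ 3 * E) * (#|` diffset A A| * E))%N by ring.
by rewrite e e2 leq_mul.
Qed.

Lemma part2_nat (G : zmodType) p (A : {fset G}) :
  (0 < #|` A|)%N -> (16 * #|` A| ^ 3 <= energy 3 A)%N ->
  (#|` A| ^ 2 * energy 2 A <= 2 * maxpm p A * energy 3 A)%N /\
  exists B : {fset G}, [/\ B `<=` A, (#|` A| <= 2 * #|` B|)%N &
    exists E3B' : nat, energy 3 B = (#|` B| ^ 3 + E3B')%N /\
      (#|` A| ^ 3 * E3B' <= 2 * maxpm p A * energy 2 A ^ 2)%N].
Proof.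
move=> n0 H.
have D0 := zero_in_D n0.
set n := #|` A| in n0 H *; set M := maxpm p A; set E := energy 2 A; set E3 := energy 3 A.
set E' := (\sum_(s <- diffset A A | s != 0%R) #|` Ashift A s| ^ 2)%N.
set E3' := (\sum_(s <- diffset A A | s != 0%R) #|` Ashift A s| ^ 3)%N.
have sE : E = (n ^ 2 + E')%N by rewrite /E (energy_split (fsubset_refl A)).
have sE3 : E3 = (n ^ 3 + E3')%N by rewrite /E3 (energy_split (fsubset_refl A)).
have hd : (n ^ 2 * E' <= M * E3)%N := ineq_d p A.
have hle : (E3' <= n * E')%N := E3p_le (fsubset_refl A).
have hE' : (n ^ 2 <= E')%N.
  rewrite -(leq_pmul2l n0).
  apply: (@leq_trans E3'); last exact: hle.
  have e : (n * n ^ 2 = n ^ 3)%N by ring.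
  rewrite e; lia.
split.
  apply: (@leq_trans (n ^ 2 * (2 * E'))%N).
    by rewrite leq_mul2l sE; apply/orP; right; lia.
  have e1 : (n ^ 2 * (2 * E') = 2 * (n ^ 2 * E'))%N by ring.
  by rewrite e1 -mulnA leq_mul2l hd orbT.
pose B := [fset a in A | (n * W (diffset A A) A a <= 2 * E)%N].
have BA : B `<=` A by apply/fsubsetP => a; rewrite !inE => /andP[].
exists B; split => //.
  apply: markov.
    by rewrite sum_W /E (energy_D (fsubset_refl A)).
  rewrite sE; have : (0 < n ^ 2)%N by rewrite expn_gt0 n0.
  lia.
exists (\sum_(s <- diffset A A | s != 0%R) #|` Ashift B s| ^ 3)%N; split.
  exact: energy_split.
apply: ineq_e => // b; rewrite !inE => /andP[].
by move=> _ h; exact: h.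
Qed.

Lemma part2_real (R : realFieldType) (n b M E E3 E3B' g : R) :
  0 < n -> n <= 2 * b -> 0 <= b -> 0 < g -> 0 <= M -> 0 < E -> 0 < E3 -> 0 <= E3B' ->
  16 * n ^+ 3 <= g * E3 ->
  g * ((b / n) ^+ 6) * E3 <= b ^+ 3 + E3B' ->
  n ^+ 3 * E3B' <= 2 * M * E ^+ 2 ->
  n ^+ 2 * E <= 2 * M * E3 ->
  1 / 512 * g * n ^+ 5 / E <= M ^+ 2.
Proof.
move=> n0 nb b0 g0 M0 E0 E30 E3B0 hg hC h4 h5.
set E3B := b ^+ 3 + E3B' in hC.
have n3 : 0 < n ^+ 3 by rewrite exprn_gt0.
have n6 : 0 < n ^+ 6 by rewrite exprn_gt0.
have hC' : g * b ^+ 6 * E3 <= E3B * n ^+ 6.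
  have e : g * b ^+ 6 * E3 = (g * (b / n) ^+ 6 * E3) * n ^+ 6.
    rewrite expr_div_n; field; exact: lt0r_neq0.
  rewrite e; nra.
have s1 : 16 * n ^+ 3 * b ^+ 6 <= g * b ^+ 6 * E3.
  have b6 : 0 <= b ^+ 6 by rewrite exprn_ge0.
  nra.
have s2 : 16 * b ^+ 6 <= E3B * n ^+ 3.
  have : (16 * b ^+ 6) * n ^+ 3 <= (E3B * n ^+ 3) * n ^+ 3.
    have e1 : 16 * b ^+ 6 * n ^+ 3 = 16 * n ^+ 3 * b ^+ 6 by ring.
    have e2 : E3B * n ^+ 3 * n ^+ 3 = E3B * n ^+ 6 by ring.
    rewrite e1 e2; exact: le_trans s1 hC'.
  by rewrite ler_pM2r.
have b3 : n ^+ 3 <= 8 * b ^+ 3.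
  have e : (2 * b) ^+ 3 = 8 * b ^+ 3 by ring.
  rewrite -e lerXn2r // ?nnegrE; nra.
have b6 : n ^+ 6 <= 64 * b ^+ 6.
  have e : (2 * b) ^+ 6 = 64 * b ^+ 6 by ring.
  rewrite -e lerXn2r // ?nnegrE; nra.
have s4 : 2 * b ^+ 3 <= E3B.
  have : (2 * b ^+ 3) * n ^+ 3 <= E3B * n ^+ 3.
    apply: le_trans s2; have bb : 0 <= b ^+ 3 by rewrite exprn_ge0.
    nra.
  by rewrite ler_pM2r.
have s5 : g * E3 <= 64 * E3B.
  have : (g * E3) * n ^+ 6 <= (64 * E3B) * n ^+ 6.
    apply: (@le_trans _ _ (g * E3 * (64 * b ^+ 6))).
      apply: ler_wpM2l; [ nra | exact: b6 ].
    have e : g * E3 * (64 * b ^+ 6) = 64 * (g * b ^+ 6 * E3) by ring.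
    rewrite e; have e2 : 64 * E3B * n ^+ 6 = 64 * (E3B * n ^+ 6) by ring.
    rewrite e2; nra.
  by rewrite ler_pM2r.
have s6 : g * n ^+ 3 * E3 <= 256 * M * E ^+ 2.
  have h : g * E3 * n ^+ 3 <= 128 * (n ^+ 3 * E3B').
    have h1 : g * E3 <= 128 * E3B' by rewrite /E3B in s4 s5; lra.
    nra.
  lra.
have s7 : g * n ^+ 5 * (E * E3) <= 512 * M ^+ 2 * E * (E * E3).
  have h0 : 0 <= g * n ^+ 3 * E3 by apply: mulr_ge0; [apply: mulr_ge0; [exact: ltW|exact: ltW]|exact: ltW].
  have h0' : 0 <= n ^+ 2 * E by apply: mulr_ge0; [exact: exprn_ge0 (ltW n0) | exact: ltW].
  have := ler_pM h0 h0' s6 h5.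
  move=> h; lra.
have s8 : g * n ^+ 5 <= 512 * M ^+ 2 * E.
  by move: s7; rewrite ler_pM2r // mulr_gt0.
rewrite ler_pdivrMr //; lra.
Qed.

Theorem theorem9 :
  exists c1 c2 : rat, 0 < c1 /\ 0 < c2 /\
  forall (R : realFieldType) (G : zmodType) (A : {fset G}),
    ((energy 3 A)%:R >= 2 * (#|` A|%:R) ^+ 3 :> R ->
       forall plus : bool,
         ((maxpm plus A)%:R) ^+ 3 >=
           ratr c1 * (#|` A|%:R) ^+ 10 /
             ((#|` diffset A A|%:R) * ((energy 2 A)%:R) ^+ 2) :> R)
    /\
    (forall beta gamma : R,
       0 <= beta <= 1 -> 0 <= gamma <= 1 -> beta <= 1 / 2 ->
       connected 3 beta gamma A ->
       (energy 3 A)%:R >= 2 ^+ 4 / gamma * (#|` A|%:R) ^+ 3 ->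
       forall plus : bool,
         ((maxpm plus A)%:R) ^+ 2 >=
           ratr c2 * gamma * (#|` A|%:R) ^+ 5 / (energy 2 A)%:R).
Proof.
exists (1 / 2), (1 / 512); split; first lra.
split; first lra.
move=> R G A; split.
  move=> H p.
  have Hn : (2 * #|` A| ^ 3 <= energy 3 A)%N.
    by rewrite -(ler_nat R) natrM natrX.
  have -> : ratr (1 / 2 : rat) = (1 / 2 : R) by rewrite fmorph_div rmorph1 rmorph_nat.
  set X := (#|` diffset A A|%:R * (energy 2 A)%:R ^+ 2 : R).
  have h : (#|` A|%:R ^+ 10 <= 2 * (maxpm p A)%:R ^+ 3 * X :> R).
    rewrite /X -!natrX -!natrM ler_nat mulnA; exact: part1_nat.
  have X0 : 0 <= X by rewrite /X mulr_ge0 ?exprn_ge0 ?ler0n.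
  have M0 : 0 <= (maxpm p A)%:R ^+ 3 :> R by rewrite exprn_ge0 ?ler0n.
  case: (ltrgt0P X) => [Xpos|Xneg|->].
  - rewrite ler_pdivrMr //; lra.
  - by move: X0; rewrite leNgt Xneg.
  - by rewrite invr0 mulr0.
move=> beta gamma /andP[b0 b1] /andP[g0 g1] hb2 hconn hE3 p.
have -> : ratr (1 / 512 : rat) = (1 / 512 : R) by rewrite fmorph_div rmorph1 rmorph_nat.
case: (ltrgt0P gamma) => [gpos|gneg|->]; last by rewrite mulr0 !mul0r exprn_ge0 ?ler0n.
  2: by exfalso; move: g0; rewrite leNgt gneg.
case: (posnP #|` A|) => [->|n0]; first by rewrite expr0n /= mulr0 mul0r exprn_ge0 ?ler0n.
have ginv : 1 <= gamma^-1 by rewrite invf_ge1.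
have hg : 16 * (#|` A|%:R) ^+ 3 <= gamma * (energy 3 A)%:R :> R.
  have e : gamma * (2 ^+ 4 / gamma * #|` A|%:R ^+ 3) = 16 * #|` A|%:R ^+ 3.
    by field; exact: lt0r_neq0.
  rewrite -e; nra.
have Hn : (16 * #|` A| ^ 3 <= energy 3 A)%N.
  rewrite -(ler_nat R) natrM natrX.
  apply: le_trans hE3.
  have n3 : 0 <= #|` A|%:R ^+ 3 :> R by rewrite exprn_ge0 ?ler0n.
  have e : 2 ^+ 4 / gamma * #|` A|%:R ^+ 3 = 16 * gamma^-1 * #|` A|%:R ^+ 3 :> R by ring.
  rewrite e; nra.
have [h5 [B [BA nB [E3B' [eB h4]]]]] := part2_nat p n0 Hn.
have hbeta : beta * #|` A|%:R <= #|` B|%:R :> R.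
  have : (#|` A|%:R <= 2 * #|` B|%:R :> R) by rewrite -natrM ler_nat.
  have : 0 <= #|` A|%:R :> R by rewrite ler0n.
  nra.
have hC := hconn B BA hbeta.
rewrite (_ : (2 * 3)%N = 6%N) // eB natrD natrX in hC.
have hE2 : (#|` A| ^ 2 <= energy 2 A)%N.
  by rewrite (energy_split (fsubset_refl A)) ?leq_addr // zero_in_D.
apply: (@part2_real R _ #|` B|%:R _ _ (energy 3 A)%:R E3B'%:R).
- by rewrite ltr0n.
- by rewrite -natrM ler_nat.
- by rewrite ler0n.
- exact: gpos.
- by rewrite ler0n.
- rewrite ltr0n; apply: leq_trans hE2; by rewrite expn_gt0 n0.
- rewrite ltr0n; apply: leq_trans Hn; by rewrite muln_gt0 expn_gt0 n0.
- by rewrite ler0n.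
- exact: hg.
- exact: hC.
- by rewrite -!natrX -!natrM ler_nat.
- by rewrite -!natrX -!natrM ler_nat.
Qed.
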